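(* Let $k\ge 2$ and $\alpha_i=\frac{1}{k-1}$ for all $1\le i\le k$. For an integer $g\ge0$ let $\ell$ be the least nonnegative residue of $g$ modulo $k-1$. Then the number $f(g)$ of $\alpha$-communal $k$-tuples with entries summing to $g$ is \[ f(g)=\binom{\frac{g-\ell k}{k-1}+k-1}{k-1}, \] and \[ \sum_{g\ge 0}f(g)x^g=\frac{1-x^{k(k-1)}}{(1-x^k)(1-x^{k-1})^k}. \]
   Context: A $k$-tuple $[g_1,\dots,g_k]$ of integers is $\alpha$-communal if $0\le g_i\le \alpha_i\sum_{j=1}^k g_j$ for every $i$. Binomial coefficients $\binom{n}{r}$ are $0$ for $0\le n<r$. *)

(* Defs.v *)
From HB Require Import structures.
From mathcomp Require Import all_boot all_order all_algebra.
Set Implicit Arguments. Unset Strict Implicit. Unset Printing Implicit Defensive.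
Import Order.TTheory GRing.Theory Num.Theory.

Local Open Scope ring_scope.

Definition communal (k : nat) (alpha : 'I_k -> rat) (t : 'I_k -> int) : bool :=
  [forall i : 'I_k, (0 <= t i) && ((t i)%:~R <= alpha i * (\sum_(j < k) t j)%:~R)].

(* Since entries are nonnegative and sum to g, each entry lies in [0, g],
   so such tuples are exactly the functions 'I_k -> 'I_(g.+1) below. *)
Definition ncommunal (k : nat) (alpha : 'I_k -> rat) (g : nat) : nat :=
  #|[set t : {ffun 'I_k -> 'I_g.+1} |
      communal alpha (fun i => (t i)%:Z) &&
      (\sum_(i < k) (t i : nat) == g)%N]|.

(* Main.v *)
Require Import Defs.
From HB Require Import structures.
From mathcomp Require Import all_boot all_order all_algebra.
From mathcomp Require Import zify ring.
Import Order.TTheory GRing.Theory Num.Theory.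
From mathcomp Require Import zify ring.
Section Helpers.
Local Open Scope nat_scope.

Lemma communalE m g (hm : 0 < m) (t : {ffun 'I_m.+1 -> 'I_g.+1}) :
  communal (fun _ : 'I_m.+1 => (m%:R : rat)^-1%R) (fun i => Posz (t i))
  = [forall i, t i * m <= \sum_(j < m.+1) t j].
Proof.
rewrite /communal; apply: eq_forallb => i.
have -> : (\sum_(j < m.+1) Posz (t j))%R = Posz (\sum_(j < m.+1) (t j : nat)).
  by rewrite -natz natr_sum; apply eq_bigr=> j _; rewrite natz.
rewrite /= -!pmulrn ler_pdivlMl ?ltr0n // -natrM ler_nat mulnC.
by [].
Qed.

Lemma term_le (n : nat) (f : 'I_n -> nat) i : f i <= \sum_(j < n) f j.
Proof. by rewrite (bigD1 i) //= leq_addr. Qed.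

Lemma subsum n (f : 'I_n -> nat) q : (forall i, f i <= q) ->
  \sum_(i < n) (q - f i) = n * q - \sum_(i < n) f i.
Proof.
move=> H.
have E : \sum_(i < n) (q - f i) + \sum_(i < n) f i = n * q.
  rewrite -big_split /=.
  under eq_bigr do rewrite subnK //.
  by rewrite sum_nat_const card_ord.
lia.
Qed.

Lemma sum_le n (f : 'I_n -> nat) q : (forall i, f i <= q) ->
  \sum_(i < n) f i <= n * q.
Proof.
move=> H; rewrite -[n in n * _]card_ord -sum_nat_const; exact: leq_sum.
Qed.

Lemma part1 m g (hm : 0 < m) :
  ncommunal (fun _ : 'I_m.+1 => (m%:R : rat)^-1%R) g
  = 'C(g %/ m + m - g %% m, m).
Proof.
set r := g %% m; set q := g %/ m.
have hg : g = q * m + r := divn_eq g m.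
have hr : r < m by rewrite ltn_mod.
have hqg : q <= g by rewrite leq_div.
clearbody q r.
rewrite /ncommunal.
set A := [set _ | _].
have charA : forall t, (t \in A) = [forall i, t i <= q] && (\sum_(i < m.+1) (t i : nat) == g).
  move=> t; rewrite inE communalE //.
  case: eqP => [->|]; rewrite ?andbF ?andbT //.
  apply: eq_forallb => i.
  apply/idP/idP => h.
  - rewrite leqNgt; apply/negP => h2.
    have : (q.+1) * m <= t i * m by rewrite leq_mul2r h2 orbT.
    move: h; rewrite mulSn; move: (nat_of_ord (t i)) => x; lia.
  - have : t i * m <= q * m by rewrite leq_mul2r h orbT.
    move: (nat_of_ord (t i)) => x; lia.
case: (ltnP q r) => hqr.
  rewrite bin_small; last by lia.
  apply/eqP; rewrite cards_eq0; apply/eqP/setP => t; rewrite charA inE.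
  apply/negbTE/negP => /andP[/forallP H /eqP E].
  have := @sum_le _ (fun i => (t i : nat)) q H; rewrite E hg; nia.
rewrite (_ : q + m - r = m + (q - r)); last by lia.
rewrite -card_ord_partitions.
set s := q - r.
pose phi (t : {ffun 'I_m.+1 -> 'I_g.+1}) : m.+1.-tuple 'I_s.+1 :=
  [tuple inord (q - t i) | i < m.+1].
have sumA : forall t, t \in A -> \sum_(i < m.+1) (q - t i) = s.
  move=> t; rewrite charA => /andP[/forallP H /eqP E].
  rewrite (@subsum _ (fun i => (t i : nat)) q) // E /s hg; nia.
have valphi : forall t, t \in A -> forall i, (tnth (phi t) i : nat) = q - t i.
  move=> t tA i; rewrite tnth_mktuple inordK // ltnS -(sumA t tA).
  exact: (@term_le _ (fun i => q - t i)).
rewrite -(card_in_imset (f := phi)).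
  apply: eq_card => h; rewrite [X in _ = X]inE.
  apply/imsetP/idP.
    case=> t tA ->; rewrite big_tuple.
    under eq_bigr do rewrite valphi //.
    by rewrite sumA.
  move=> /eqP hs; rewrite big_tuple in hs.
  have hle : forall i, (tnth h i : nat) <= s.
    by move=> i; have := @term_le _ (fun i => (tnth h i : nat)) i; rewrite hs.
  pose t : {ffun 'I_m.+1 -> 'I_g.+1} := [ffun i => inord (q - tnth h i)].
  have vt : forall i, (t i : nat) = q - tnth h i.
    by move=> i; rewrite ffunE inordK // ltnS (leq_trans (leq_subr _ _)).
  have tA : t \in A.
    rewrite charA; apply/andP; split.
      by apply/forallP => i; rewrite vt leq_subr.
    under eq_bigr do rewrite vt.
    rewrite (@subsum _ (fun i => (tnth h i : nat)) q) ?hs.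
      by rewrite /s hg; apply/eqP; nia.
    by move=> i; apply: leq_trans (hle i) _; rewrite /s leq_subr.
  exists t => //; apply: eq_from_tnth => i; apply: val_inj.
  rewrite /= valphi // vt.
  have := hle i; rewrite /s; move: (tnth h i) => x /=; lia.
move=> t1 t2 t1A t2A E; apply/ffunP => i; apply: val_inj.
have := valphi t1 t1A i; have := valphi t2 t2A i; rewrite E => ->.
move: t1A t2A; rewrite !charA => /andP[/forallP h1 _] /andP[/forallP h2 _].
have := h1 i; have := h2 i; move: (t1 i) (t2 i) => x y /=; lia.
Qed.

End Helpers.
Section P2.
Local Open Scope ring_scope.

Lemma stepG (R : comNzRingType) (y : R) m N :
  (1 - y) * \sum_(j < N.+1) ('C(j + m.+1, m.+1))%:R * y ^+ j
  = \sum_(j < N.+1) ('C(j + m, m))%:R * y ^+ j - ('C(N + m.+1, m.+1))%:R * y ^+ N.+1.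
Proof.
elim: N => [|N IH].
  rewrite !big_ord_recr !big_ord0 /= !add0n !binn; ring.
rewrite big_ord_recr mulrDr IH [in RHS]big_ord_recr /=.
rewrite !addSn !addnS binS !natrD !exprS; ring.
Qed.

Lemma geomC (R : comNzRingType) (y : R) m N : exists r : R,
  (1 - y) ^+ m.+1 * \sum_(j < N.+1) ('C(j + m, m))%:R * y ^+ j = 1 + y ^+ N.+1 * r.
Proof.
elim: m => [|m [r IH]].
  exists (-1).
  under eq_bigr do rewrite addn0 bin0 mul1r.
  have := subrX1 y N.+1; rewrite expr1 => H.
  have -> : (1 - y) * \sum_(i < N.+1) y ^+ i = - (y ^+ N.+1 - 1) by rewrite H; ring.
  ring.
exists (r - (1 - y) ^+ m.+1 * ('C(N + m.+1, m.+1))%:R).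
rewrite exprSr -mulrA stepG mulrBr IH; ring.
Qed.

End P2.
Section P3.
Local Open Scope nat_scope.

Lemma divmod_eq m a b c d : b < m -> d < m ->
  (a * m + b == c * m + d) = (a == c) && (b == d).
Proof.
move=> hb hd; apply/eqP/andP => [E|[/eqP-> /eqP->]] //; split; apply/eqP.
  have := congr1 (divn^~ m) E; rewrite /= !divnMDl ?(leq_ltn_trans _ hb) //.
  by rewrite !divn_small // !addn0.
have := congr1 (modn^~ m) E; rewrite /= !modnMDl.
by rewrite !modn_small.
Qed.

Lemma sum_pick N a (F : nat -> nat) : a < N -> \sum_(t < N) (t == a :> nat) * F t = F a.
Proof.
move=> H; rewrite (bigD1 (Ordinal H)) //= eqxx mul1n big1 ?addn0 // => i hi.
suff -> : (i == a :> nat) = false by rewrite mul0n.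
by apply/negbTE; apply: contra hi => /eqP e; apply/eqP; apply: val_inj.
Qed.

Lemma countF m n j (hm : 0 < m) : j <= n ->
  \sum_(l < m) \sum_(t < n.+1) (j == l * m.+1 + m * t) * 'C(t + m, m)
  = 'C(j %/ m + m - j %% m, m).
Proof.
move=> hjn.
set r := j %% m; set q := j %/ m.
have hg : j = q * m + r := divn_eq j m.
have hr : r < m by rewrite ltn_mod.
have hqj : q <= j by rewrite leq_div.
clearbody q r.
have E : forall l : 'I_m, forall t : nat, (j == l * m.+1 + m * t) =
   (l == r :> nat) && ((t == q - r) && (r <= q)).
  move=> l t.
  have -> : l * m.+1 + m * t = (l + t) * m + l by rewrite mulnS; ring.
  rewrite hg divmod_eq //.
  apply/andP/andP => [[/eqP h1 /eqP h2]|[/eqP h1 /andP[/eqP h2 h3]]].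
    split; [apply/eqP; lia | apply/andP; split; [apply/eqP; lia | lia]].
  split; apply/eqP; lia.
have inner : forall l : 'I_m, \sum_(t < n.+1) (j == l * m.+1 + m * t) * 'C(t + m, m)
   = (l == r :> nat) * ((r <= q) * 'C(q - r + m, m)).
  move=> l; under eq_bigr do rewrite E.
  case: (l == r :> nat); last by rewrite mul0n big1.
  case: (r <= q); last by rewrite mul1n mul0n big1 // => t _; rewrite andbF.
  rewrite !mul1n; under eq_bigr do rewrite andbT /=.
  apply: (@sum_pick _ _ (fun t => 'C(t + m, m))); lia.
under eq_bigr do rewrite inner.
rewrite (@sum_pick _ _ (fun _ => (r <= q) * 'C(q - r + m, m))) //.
case: leqP => h; first by rewrite mul1n; congr 'C(_, _); lia.
by rewrite mul0n bin_small //; lia.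
Qed.

End P3.
Local Open Scope ring_scope.

Theorem mainTheorem10 (k : nat) (hk : (2 <= k)%N) :
  let alpha := fun _ : 'I_k => ((k - 1)%N%:R : rat)^-1 in
  (forall g : nat,
     let l := (g %% (k - 1))%N in
     ncommunal alpha g = 'C((g - l) %/ (k - 1) + (k - 1) - l, k - 1)) /\
  (forall n : nat,
     \sum_(i < n.+1)
        (((1 - 'X^k) * (1 - 'X^(k - 1)) ^+ k : {poly int})`_i
           * (ncommunal alpha (n - i))%:Z)
     = (1 - 'X^(k * (k - 1)) : {poly int})`_n).
Proof.
case: k hk => // m; rewrite ltnS => hm.
have e : (m.+1 - 1 = m)%N by rewrite subn1.
rewrite e /=.
have P1 := fun g => @part1 m g hm.
split.
  move=> g; rewrite P1; congr 'C(_, _).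
  have h : ((g - g %% m) %/ m = g %/ m)%N by rewrite {1}(divn_eq g m) addnK mulnK.
  by rewrite h.
move=> n.
pose G := \sum_(t < n.+1) ('C(t + m, m))%:R * ('X^m : {poly int}) ^+ t.
pose S := \sum_(l < m) ('X^(l * m.+1) : {poly int}).
have coefF : forall j, (j <= n)%N -> (S * G)`_j = (ncommunal (fun _ : 'I_m.+1 => (m%:R : rat)^-1) j)%:Z.
  move=> j hj; rewrite P1 -(@countF m n j hm hj) -natz natr_sum /S /G mulr_suml coef_sum.
  apply: eq_bigr => l _; rewrite natr_sum mulr_sumr coef_sum.
  apply: eq_bigr => t _.
  by rewrite -exprM mulrCA -exprD mulr_natl coefMn coefXn natrM mulr_natr.
under eq_bigr => i _ do rewrite -coefF ?leq_subr //.
rewrite -coefM.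
have hS : (1 - 'X^(m.+1)) * S = 1 - 'X^(m.+1 * m).
  have -> : S = \sum_(i < m) ('X^(m.+1) : {poly int}) ^+ i.
    by apply: eq_bigr => i _; rewrite -exprM mulnC.
  have := subrX1 ('X^(m.+1) : {poly int}) m; rewrite exprM => H.
  have -> : (1 - 'X^(m.+1)) * \sum_(i < m) ('X^(m.+1) : {poly int}) ^+ i
     = - (('X^(m.+1)) ^+ m - 1) by rewrite H; ring.
  ring.
have [r hG] := @geomC _ ('X^m : {poly int}) m n.
have -> : (1 - 'X^(m.+1)) * (1 - 'X^m) ^+ m.+1 * (S * G)
   = ((1 - 'X^(m.+1)) * S) * ((1 - 'X^m) ^+ m.+1 * G) by ring.
rewrite hS /G hG mulrDr mulr1 coefD -exprM mulrCA coefXnM ifT ?addr0 //.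
nia.
Qed.
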